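(* Let $s\ge1$, $P\ge 2s+1$, $d\ge1$, and let $\mathbf{W}$ and the randomized map $\phi$ be as in the context. Let $\mathbf{G}\in\mathbb{R}^{d\times P}$ be arbitrary and let $\mathbf{N}=[\mathbf{n}_1,\dots,\mathbf{n}_P]\in\mathbb{R}^{d\times P}$ be fixed (chosen independently of the randomness of $\phi$) with $|\{j:\mathbf{n}_j\neq\mathbf{0}\}|\le s$. Then with probability 1, $\phi(\mathbf{G}\mathbf{W}+\mathbf{N})=\{j:\mathbf{n}_j\neq \mathbf{0}\}$.
   Context: Let $\mathbf{C}\in\mathbb{C}^{P\times P}$ be the IDFT matrix $\mathbf{C}_{jk}=\frac{1}{\sqrt P}\exp\!\big(\frac{2\pi i}{P}(j-1)(k-1)\big)$, $j,k=1,\dots,P$; let $\mathbf{C}_L$ be its first $P-2s$ rows and $\mathbf{C}_R$ its last $2s$ rows; $\dagger$ denotes conjugate transpose. Let $\mathbf{A}^{Cyc}\in\{0,1\}^{P\times P}$ be given by $\mathbf{A}^{Cyc}_{k,\ell}=1$ iff $(\ell-k)\bmod P\in\{0,1,\dots,2s\}$. For each $k$, let $\alpha_k=\{\ell:\mathbf{A}^{Cyc}_{k,\ell}=0\}$, and let $\mathbf{q}_k\in\mathbb{C}^{1\times(P-2s-1)}$ be the unique row vector with $[\mathbf{q}_k,\,1]\,(\mathbf{C}_L)_{\cdot,\alpha_k}=\mathbf{0}$. Let $\mathbf{Q}\in\mathbb{C}^{P\times(P-2s-1)}$ have $k$-th row $\mathbf{q}_k$, and $\mathbf{W}=[\mathbf{Q},\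 \mathbf{1}_P]\,\mathbf{C}_L$. The map $\phi$: given $\mathbf{R}\in\mathbb{C}^{d\times P}$, draw $\mathbf{f}\in\mathbb{R}^{1\times d}$ with distribution $\mathcal{N}(\mathbf{1}_{1\times d},\mathbf{I}_d)$; compute $(h_{P-2s},h_{P-2s+1},\dots,h_{P-1})=\mathbf{f}\mathbf{R}\mathbf{C}_R^{\dagger}$; let $\beta=(\beta_0,\dots,\beta_{s-1})$ be any solution of $\sum_{k=0}^{s-1}\beta_k h_{P-s-i+k}=h_{P-i}$ for $i=1,\dots,s$; then for $\ell=0,1,\dots,P-2s-1$ in increasing order set $h_\ell=\sum_{u=0}^{s-1}\beta_u h_{\ell+u-s}$, where indices are taken modulo $P$ (so $h_{-m}=h_{P-m}$); let $\mathbf{h}=(h_0,\dots,h_{P-1})^T$ and $\mathbf{t}=(t_0,\dots,t_{P-1})^T=\mathbf{C}\mathbf{h}$; return $\phi(\mathbf{R})=\{j\in\{1,\dots,P\}:t_{j-1}\neq 0\}$. *)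

(* Defs.v *)
From Stdlib Require Import Reals List.
Open Scope R_scope.

Definition Cpx : Type := (R * R)%type.
Definition C0 : Cpx := (0, 0).
Definition C1 : Cpx := (1, 0).
Definition RtoC (x : R) : Cpx := (x, 0).
Definition Cadd (z w : Cpx) : Cpx := (fst z + fst w, snd z + snd w).
Definition Cmul (z w : Cpx) : Cpx :=
  (fst z * fst w - snd z * snd w, fst z * snd w + snd z * fst w).
Definition Cconj (z : Cpx) : Cpx := (fst z, - snd z).

Fixpoint Rsum (n : nat) (F : nat -> R) : R :=
  match n with O => 0 | S m => Rsum m F + F m end.
Fixpoint Rprod (n : nat) (F : nat -> R) : R :=
  match n with O => 1 | S m => Rprod m F * F m end.
Fixpoint Csum (n : nat) (F : nat -> Cpx) : Cpx :=
  match n with O => C0 | S m => Cadd (Csum m F) (F m) end.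

(* ---------- the IDFT matrix, 0-based: Cmat P j k = exp(2 pi i j k / P)/sqrt P ---------- *)
Definition Cmat (P j k : nat) : Cpx :=
  let th := 2 * PI * INR j * INR k / INR P in
  (cos th / sqrt (INR P), sin th / sqrt (INR P)).
(* C_L = rows 0 .. P-2s-1 ; C_R = rows P-2s .. P-1 of Cmat. *)

(* alpha_k = { l < P : A^Cyc_{k,l} = 0 } = { l : (l - k) mod P > 2s }.
   Row k of Q (entries Q k m, m < P-2s-1) satisfies [q_k, 1] (C_L)_{., alpha_k} = 0;
   the coefficient 1 multiplies the last row (index P-2s-1) of C_L. *)
Definition is_Q (s P : nat) (Q : nat -> nat -> Cpx) : Prop :=
  forall k l, (k < P)%nat -> (l < P)%nat -> (2 * s < (l + P - k) mod P)%nat ->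
    Cadd (Csum (P - 2 * s - 1) (fun m => Cmul (Q k m) (Cmat P m l)))
         (Cmat P (P - 2 * s - 1) l) = C0.

(* W = [Q, 1_P] C_L  (P x P) *)
Definition Wmat (s P : nat) (Q : nat -> nat -> Cpx) (k l : nat) : Cpx :=
  Cadd (Csum (P - 2 * s - 1) (fun m => Cmul (Q k m) (Cmat P m l)))
       (Cmat P (P - 2 * s - 1) l).

Definition GWN (s P : nat) (Q : nat -> nat -> Cpx) (G N : nat -> nat -> R)
  (i l : nat) : Cpx :=
  Cadd (Csum P (fun k => Cmul (RtoC (G i k)) (Wmat s P Q k l))) (RtoC (N i l)).

(* h_{P-2s+r} (r < 2s) = (f Rm C_R^dagger)_r *)
Definition h_init (s P d : nat) (Rm : nat -> nat -> Cpx) (f : nat -> R) (j : nat) : Cpx :=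
  if (P - 2 * s <=? j)%nat then
    Csum d (fun i => Cmul (RtoC (f i))
      (Csum P (fun k => Cmul (Rm i k) (Cconj (Cmat P j k)))))
  else C0.

Definition beta_solves (s P : nat) (h : nat -> Cpx) (beta : nat -> Cpx) : Prop :=
  forall i, (1 <= i <= s)%nat ->
    Csum s (fun k => Cmul (beta k) (h (P - s - i + k)%nat)) = h (P - i)%nat.

(* recursion: for l = 0,...,n-1 in increasing order,
   h_l := sum_{u<s} beta_u h_{(l+u-s) mod P} *)
Fixpoint h_rec (s P : nat) (beta : nat -> Cpx) (h0 : nat -> Cpx) (n : nat) : nat -> Cpx :=
  match n with
  | O => h0
  | S m =>
      let g := h_rec s P beta h0 m in
      fun k => if (k =? m)%nat
               then Csum s (fun u => Cmul (beta u) (g ((m + u + P - s) mod P)%nat))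
               else g k
  end.

Definition h_full (s P d : nat) (Rm : nat -> nat -> Cpx) (f : nat -> R) (beta : nat -> Cpx)
  : nat -> Cpx := h_rec s P beta (h_init s P d Rm f) (P - 2 * s).

(* t = Cpx h ; t_j for j < P (0-based; j corresponds to index j+1 of the paper) *)
Definition t_vec (s P d : nat) (Rm : nat -> nat -> Cpx) (f : nat -> R) (beta : nat -> Cpx)
  (j : nat) : Cpx :=
  Csum P (fun k => Cmul (Cmat P j k) (h_full s P d Rm f beta k)).

Definition phi_equals (s P d : nat) (Rm : nat -> nat -> Cpx) (f : nat -> R)
  (beta : nat -> Cpx) (S : nat -> Prop) : Prop :=
  forall j, (j < P)%nat -> (t_vec s P d Rm f beta j <> C0 <-> S j).

Definition phi_fails (s P d : nat) (Rm : nat -> nat -> Cpx) (S : nat -> Prop)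
  (f : nat -> R) : Prop :=
  (~ exists beta, beta_solves s P (h_init s P d Rm f) beta) \/
  (exists beta, beta_solves s P (h_init s P d Rm f) beta /\ ~ phi_equals s P d Rm f beta S).

Definition col_nonzero (d : nat) (N : nat -> nat -> R) (j : nat) : Prop :=
  exists i, (i < d)%nat /\ N i j <> 0.

Definition lebesgue_null (d : nat) (E : (nat -> R) -> Prop) : Prop :=
  forall eps, 0 < eps ->
    exists a b : nat -> nat -> R,
      (forall n i, (i < d)%nat -> a n i <= b n i) /\
      (forall M, Rsum M (fun n => Rprod d (fun i => b n i - a n i)) <= eps) /\
      (forall f, E f -> exists n, forall i, (i < d)%nat -> a n i <= f i <= b n i).

(* Main.v *)
Require Import Defs.
From Stdlib Require Import Reals List.
Open Scope R_scope.
From Stdlib Require Import Lra Lia Psatz ZArith.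
From Stdlib Require Cantor IndefiniteDescription Classical_Prop.

Lemma Rsum_ext n F G : (forall i, (i < n)%nat -> F i = G i) -> Rsum n F = Rsum n G.
Proof. induction n; simpl; intros H; auto. rewrite IHn by (intros; apply H; lia). rewrite H by lia. reflexivity. Qed.

Lemma Rsum_plus n F G : Rsum n (fun i => F i + G i) = Rsum n F + Rsum n G.
Proof. induction n; simpl; [lra|]. rewrite IHn; lra. Qed.

Lemma Rsum_scal n c F : Rsum n (fun i => c * F i) = c * Rsum n F.
Proof. induction n; simpl; [lra|]. rewrite IHn; lra. Qed.

Lemma Rsum_opp n F : Rsum n (fun i => - F i) = - Rsum n F.
Proof. induction n; simpl; [lra|]. rewrite IHn; lra. Qed.

Lemma Rsum_zero n F : (forall i, (i<n)%nat -> F i = 0) -> Rsum n F = 0.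
Proof. intros H; rewrite (Rsum_ext n F (fun _ => 0)) by auto. induction n; simpl; [lra|]. rewrite IHn by (intros; apply H; lia); lra. Qed.

Lemma Rsum_swap n m F : Rsum n (fun i => Rsum m (fun j => F i j)) = Rsum m (fun j => Rsum n (fun i => F i j)).
Proof. induction n; simpl. - symmetry; apply Rsum_zero; auto. - rewrite IHn, <- Rsum_plus. reflexivity. Qed.

Lemma Rsum_delta n j c F : (j < n)%nat -> Rsum n (fun i => if (i =? j)%nat then c * F i else 0) = c * F j.
Proof. induction n; intros H; simpl; [lia|].
  destruct (Nat.eq_dec j n).
  - subst. rewrite Nat.eqb_refl. rewrite Rsum_zero; [lra|]. intros i Hi. destruct (Nat.eqb_spec i n); [lia|auto].
  - destruct (Nat.eqb_spec n j); [lia|]. rewrite IHn by lia. lra. Qed.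

Lemma Rsum_nonneg n F : (forall i, (i<n)%nat -> 0 <= F i) -> 0 <= Rsum n F.
Proof. induction n; simpl; intros; [lra|]. assert (0 <= F n) by (apply H; lia). assert (0<= Rsum n F) by (apply IHn; intros; apply H; lia). lra. Qed.

Lemma Rsum_le n F G : (forall i, (i<n)%nat -> F i <= G i) -> Rsum n F <= Rsum n G.
Proof. induction n; simpl; intros; [lra|]. assert (F n <= G n) by (apply H; lia). assert (Rsum n F <= Rsum n G) by (apply IHn; intros; apply H; lia). lra. Qed.

Lemma Rsum_add n m F : Rsum (n + m) F = Rsum n F + Rsum m (fun i => F (n + i)%nat).
Proof. induction m; simpl. - rewrite Nat.add_0_r; lra. - rewrite Nat.add_succ_r; simpl. rewrite IHm; lra. Qed.

Lemma Rsum_shift n F : Rsum (S n) F = F O + Rsum n (fun i => F (S i)).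
Proof. replace (S n) with (1 + n)%nat by lia. rewrite Rsum_add. simpl. lra. Qed.

Lemma Cpx_eq (z w : Cpx) : fst z = fst w -> snd z = snd w -> z = w.
Proof. destruct z, w; simpl; intros; subst; auto. Qed.

Lemma Csum_fst n F : fst (Csum n F) = Rsum n (fun i => fst (F i)).
Proof. induction n; simpl; auto. rewrite IHn; auto. Qed.
Lemma Csum_snd n F : snd (Csum n F) = Rsum n (fun i => snd (F i)).
Proof. induction n; simpl; auto. rewrite IHn; auto. Qed.


Lemma Rsum_tele n F : Rsum n (fun k => F (S k) - F k) = F n - F O.
Proof. induction n; simpl; [lra|]. rewrite IHn; lra. Qed.

Lemma cos_ne1 a : 0 < a < 2 * PI -> cos a <> 1.
Proof. intros Ha Hc. pose proof (sin2_cos2 a) as E. rewrite Hc in E. unfold Rsqr in E.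
  assert (sin a = 0) by nra.
  destruct (Rtotal_order a PI) as [H1|[H1|H1]].
  - pose proof (sin_gt_0 a ltac:(lra) H1); lra.
  - subst. rewrite cos_PI in Hc; lra.
  - pose proof (sin_lt_0 a H1 ltac:(lra)); lra. Qed.

Lemma trig_orth (P r : nat) : (0 < r < P)%nat ->
  Rsum P (fun k => cos (2*PI*INR r*INR k/INR P)) = 0 /\
  Rsum P (fun k => sin (2*PI*INR r*INR k/INR P)) = 0.
Proof.
  intros Hr. set (a := 2*PI*INR r/INR P).
  assert (HP : 0 < INR P) by (apply lt_0_INR; lia).
  assert (E : forall k, 2*PI*INR r*INR k/INR P = INR k * a) by (intros; unfold a; field; lra).
  rewrite (Rsum_ext _ _ (fun k => cos (INR k * a))) by (intros; rewrite E; auto).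
  rewrite (Rsum_ext _ (fun k => sin _) (fun k => sin (INR k * a))) by (intros; rewrite E; auto).
  set (Sc := Rsum P (fun k => cos (INR k * a))). set (Ss := Rsum P (fun k => sin (INR k * a))).
  assert (Hpa : INR P * a = 0 + 2 * INR r * PI) by (unfold a; field; lra).
  assert (T1 : (cos a - 1) * Sc - sin a * Ss = 0).
  { assert (Rsum P (fun k => (cos a - 1) * cos (INR k * a) + (-sin a) * sin (INR k * a)) = 0).
    { rewrite (Rsum_ext _ _ (fun k => cos (INR (S k) * a) - cos (INR k * a))).
      - rewrite (Rsum_tele P (fun k => cos (INR k * a))). rewrite Hpa, cos_period. simpl. rewrite Rmult_0_l, cos_0. lra.
      - intros. rewrite S_INR. replace ((INR i + 1) * a) with (INR i * a + a) by ring. rewrite cos_plus. ring. }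
    rewrite Rsum_plus, !Rsum_scal in H. unfold Sc, Ss. lra. }
  assert (T2 : (cos a - 1) * Ss + sin a * Sc = 0).
  { assert (Rsum P (fun k => (cos a - 1) * sin (INR k * a) + sin a * cos (INR k * a)) = 0).
    { rewrite (Rsum_ext _ _ (fun k => sin (INR (S k) * a) - sin (INR k * a))).
      - rewrite (Rsum_tele P (fun k => sin (INR k * a))). rewrite Hpa, sin_period. simpl. rewrite Rmult_0_l, sin_0. lra.
      - intros. rewrite S_INR. replace ((INR i + 1) * a) with (INR i * a + a) by ring. rewrite sin_plus. ring. }
    rewrite Rsum_plus, !Rsum_scal in H. unfold Sc, Ss. lra. }
  assert (Ha : 0 < a < 2 * PI).
  { assert (0 < INR r) by (apply lt_0_INR; lia). assert (INR r < INR P) by (apply lt_INR; lia).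
    pose proof PI_RGT_0. unfold a. split.
    - apply Rdiv_lt_0_compat; nra.
    - apply Rmult_lt_reg_r with (INR P); auto. field_simplify; nra. }
  pose proof (cos_ne1 a Ha). pose proof (sin2_cos2 a). unfold Rsqr in *.
  assert (D : (cos a - 1) * (cos a - 1) + sin a * sin a > 0).
  { assert (cos a - 1 <> 0) by lra. assert (0 < (cos a - 1)*(cos a - 1)) by (apply Rsqr_pos_lt; auto). nra. }
  assert (E1 : ((cos a - 1) * (cos a - 1) + sin a * sin a) * Sc = 0).
  { replace (((cos a - 1) * (cos a - 1) + sin a * sin a) * Sc) with ((cos a -1)*((cos a - 1)*Sc - sin a*Ss) + sin a*((cos a - 1)*Ss + sin a * Sc)) by ring. rewrite T1, T2; ring. }
  assert (E2 : ((cos a - 1) * (cos a - 1) + sin a * sin a) * Ss = 0).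
  { replace (((cos a - 1) * (cos a - 1) + sin a * sin a) * Ss) with ((cos a -1)*((cos a - 1)*Ss + sin a*Sc) - sin a*((cos a - 1)*Sc - sin a * Ss)) by ring. rewrite T1, T2; ring. }
  apply Rmult_integral in E1; apply Rmult_integral in E2. split; lra.
Qed.


Definition th (P j k : nat) := 2 * PI * INR j * INR k / INR P.

Lemma Rsum_const n c : Rsum n (fun _ => c) = INR n * c.
Proof. induction n; simpl Rsum; [simpl; lra|]. rewrite IHn, S_INR; ring. Qed.

Lemma Cmat_orth (P m j : nat) : (m < P)%nat -> (j < P)%nat ->
  Csum P (fun k => Cmul (Cmat P m k) (Cconj (Cmat P j k))) = if (m =? j)%nat then Defs.C1 else Defs.C0.
Proof.
  intros Hm Hj.
  assert (HP : 0 < INR P) by (apply lt_0_INR; lia).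
  assert (Hsq : sqrt (INR P) * sqrt (INR P) = INR P) by (apply sqrt_sqrt; lra).
  assert (Hsq0 : 0 < sqrt (INR P)) by (apply sqrt_lt_R0; lra).
  assert (F : fst (Csum P (fun k => Cmul (Cmat P m k) (Cconj (Cmat P j k)))) =
              / INR P * Rsum P (fun k => cos (th P m k - th P j k))).
  { rewrite Csum_fst, <- Rsum_scal. apply Rsum_ext; intros k _.
    unfold Cmat, Cmul, Cconj, th; simpl. rewrite cos_minus. set (q := sqrt (INR P)) in *. rewrite <- Hsq. field. lra. }
  assert (S : snd (Csum P (fun k => Cmul (Cmat P m k) (Cconj (Cmat P j k)))) =
              / INR P * Rsum P (fun k => sin (th P m k - th P j k))).
  { rewrite Csum_snd, <- Rsum_scal. apply Rsum_ext; intros k _.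
    unfold Cmat, Cmul, Cconj, th; simpl. rewrite sin_minus. set (q := sqrt (INR P)) in *. rewrite <- Hsq. field. lra. }
  destruct (Nat.eqb_spec m j).
  - subst. apply Cpx_eq; rewrite ?F, ?S; simpl.
    + rewrite (Rsum_ext _ _ (fun _ => 1)). rewrite Rsum_const. field; lra. intros; rewrite Rminus_diag, cos_0; auto.
    + rewrite (Rsum_ext _ _ (fun _ => 0)). rewrite Rsum_const. field; lra. intros; rewrite Rminus_diag, sin_0; auto.
  - destruct (Nat.lt_ge_cases j m) as [Hl|Hl].
    + destruct (trig_orth P (m - j) ltac:(lia)) as [A B].
      assert (E : forall k, th P m k - th P j k = 2 * PI * INR (m - j) * INR k / INR P).
      { intros; unfold th; rewrite minus_INR by lia; field; lra. }
      apply Cpx_eq; rewrite ?F, ?S; simpl.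
      * rewrite (Rsum_ext _ _ _ (fun k i => f_equal cos (E k))). rewrite A. unfold Rdiv; ring.
      * rewrite (Rsum_ext _ _ _ (fun k i => f_equal sin (E k))). rewrite B. unfold Rdiv; ring.
    + destruct (trig_orth P (j - m) ltac:(lia)) as [A B].
      assert (E : forall k, th P m k - th P j k = - (2 * PI * INR (j - m) * INR k / INR P)).
      { intros; unfold th; rewrite minus_INR by lia; field; lra. }
      apply Cpx_eq; rewrite ?F, ?S; simpl.
      * rewrite (Rsum_ext _ _ (fun k => cos (2 * PI * INR (j - m) * INR k / INR P))). rewrite A. unfold Rdiv; ring.
        intros; rewrite E, cos_neg; auto.
      * rewrite (Rsum_ext _ _ (fun k => - sin (2 * PI * INR (j - m) * INR k / INR P))). rewrite Rsum_opp, B. unfold Rdiv; ring.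
        intros; rewrite E, sin_neg; auto.
Qed.


Definition Csub (z w : Cpx) : Cpx := (fst z - fst w, snd z - snd w).
Ltac Csolve := apply Cpx_eq; unfold Csub, Cadd, Cmul, Defs.C0, Defs.C1, RtoC, Cconj; simpl; ring.

Lemma Csum_ext n F G : (forall i, (i < n)%nat -> F i = G i) -> Csum n F = Csum n G.
Proof. induction n; simpl; intros H; auto. rewrite IHn by (intros; apply H; lia). rewrite H by lia. reflexivity. Qed.
Lemma Csum_add n F G : Csum n (fun i => Cadd (F i) (G i)) = Cadd (Csum n F) (Csum n G).
Proof. induction n; simpl; [Csolve|]. rewrite IHn; Csolve. Qed.
Lemma Csum_sub n F G : Csum n (fun i => Csub (F i) (G i)) = Csub (Csum n F) (Csum n G).
Proof. induction n; simpl; [Csolve|]. rewrite IHn; Csolve. Qed.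
Lemma Csum_scal n c F : Csum n (fun i => Cmul c (F i)) = Cmul c (Csum n F).
Proof. induction n; simpl; [Csolve|]. rewrite IHn; Csolve. Qed.
Lemma Csum_scar n c F : Csum n (fun i => Cmul (F i) c) = Cmul (Csum n F) c.
Proof. induction n; simpl; [Csolve|]. rewrite IHn; Csolve. Qed.
Lemma Csum_zero n F : (forall i, (i<n)%nat -> F i = Defs.C0) -> Csum n F = Defs.C0.
Proof. induction n; simpl; intros H; auto. rewrite IHn, H by (intros; try apply H; lia). Csolve. Qed.
Lemma Csum_shift n F : Csum (S n) F = Cadd (F O) (Csum n (fun i => F (S i))).
Proof. induction n; simpl in *; [Csolve|]. rewrite IHn. Csolve. Qed.
Lemma Csum_swap n m F : Csum n (fun i => Csum m (fun j => F i j)) = Csum m (fun j => Csum n (fun i => F i j)).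
Proof. induction n; simpl. - symmetry; apply Csum_zero; auto. - rewrite IHn, <- Csum_add. reflexivity. Qed.
Lemma Csum_delta n j c F : (j < n)%nat -> Csum n (fun i => if (i =? j)%nat then Cmul c (F i) else Defs.C0) = Cmul c (F j).
Proof. induction n; intros H; simpl; [lia|].
  destruct (Nat.eq_dec j n).
  - subst. rewrite Nat.eqb_refl. rewrite Csum_zero; [Csolve|]. intros i Hi. destruct (Nat.eqb_spec i n); [lia|auto].
  - destruct (Nat.eqb_spec n j); [lia|]. rewrite IHn by lia. Csolve. Qed.

Fixpoint Lop (r : list Cpx) (x : nat -> Cpx) : nat -> Cpx :=
  match r with nil => x | c :: r' => fun a => Csub (Lop r' x (S a)) (Cmul c (Lop r' x a)) end.
Fixpoint coef (r : list Cpx) (u : nat) : Cpx :=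
  match r with
  | nil => if (u =? 0)%nat then Defs.C1 else Defs.C0
  | c :: r' => Csub (match u with O => Defs.C0 | S u' => coef r' u' end) (Cmul c (coef r' u))
  end.

Lemma coef_high r u : (length r < u)%nat -> coef r u = Defs.C0.
Proof. revert u; induction r; intros u H; simpl in *.
  - destruct u; [lia|reflexivity].
  - destruct u; [lia|]. rewrite IHr by lia. rewrite IHr by lia. Csolve. Qed.
Lemma coef_top r : coef r (length r) = Defs.C1.
Proof. induction r; simpl; auto. rewrite IHr, coef_high by lia. Csolve. Qed.

Lemma Lop_coef r x a : Lop r x a = Csum (S (length r)) (fun u => Cmul (coef r u) (x (a+u)%nat)).
Proof.
  revert a; induction r as [|c r IH]; intros a; simpl Lop.
  - simpl. rewrite Nat.add_0_r. Csolve.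
  - rewrite !IH. simpl coef. simpl length.
    rewrite (Csum_ext _ (fun u => Cmul (Csub match u with O => Defs.C0 | S u' => coef r u' end (Cmul c (coef r u))) (x (a+u)%nat)) (fun u => Csub (Cmul match u with O => Defs.C0 | S u' => coef r u' end (x (a+u)%nat)) (Cmul c (Cmul (coef r u) (x (a+u)%nat))))) by (intros; destruct i; Csolve).
    rewrite Csum_sub, Csum_scal. rewrite (Csum_shift (S (length r))). 
    rewrite (Csum_ext _ (fun u => Cmul (coef r u) (x (S a + u)%nat)) (fun i => Cmul (coef r i) (x (a + S i)%nat))) by (intros; f_equal; f_equal; lia).
    set (A := Csum (S (length r)) (fun i => Cmul (coef r i) (x (a + S i)%nat))).
    replace (Csum (S (S (length r))) (fun u => Cmul (coef r u) (x (a + u)%nat))) with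
      (Csum (S (length r)) (fun u => Cmul (coef r u) (x (a + u)%nat))) by (simpl; rewrite (coef_high r (S (length r))) by lia; Csolve).
    Csolve.
Qed.

Lemma Lop_rec r x a : Lop r x a = Cadd (x (a + length r)%nat) (Csum (length r) (fun u => Cmul (coef r u) (x (a+u)%nat))).
Proof. rewrite Lop_coef. simpl Csum. rewrite coef_top. Csolve. Qed.

Lemma Lop_ext r x y : (forall a, x a = y a) -> forall a, Lop r x a = Lop r y a.
Proof. induction r; simpl; intros H a0; auto. rewrite !IHr by auto. reflexivity. Qed.
Lemma Lop_shift r x u a : Lop r (fun b => x (b + u)%nat) a = Lop r x (a + u)%nat.
Proof. revert a; induction r; intros a0; simpl; auto. rewrite !IHr. reflexivity. Qed.
Lemma Lop_add r x y a : Lop r (fun b => Cadd (x b) (y b)) a = Cadd (Lop r x a) (Lop r y a).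
Proof. revert a; induction r; intros a0; simpl; auto. rewrite !IHr. Csolve. Qed.
Lemma Lop_sub r x y a : Lop r (fun b => Csub (x b) (y b)) a = Csub (Lop r x a) (Lop r y a).
Proof. revert a; induction r; intros a0; simpl; auto. rewrite !IHr. Csolve. Qed.
Lemma Lop_scal r c x a : Lop r (fun b => Cmul c (x b)) a = Cmul c (Lop r x a).
Proof. revert a; induction r; intros a0; simpl; auto. rewrite !IHr. Csolve. Qed.
Lemma Lop_zero r x : (forall a, x a = Defs.C0) -> forall a, Lop r x a = Defs.C0.
Proof. induction r; simpl; intros H a0; auto. rewrite !IHr by auto. Csolve. Qed.
Lemma Lop_sum r n (y : nat -> nat -> Cpx) a : Lop r (fun b => Csum n (fun k => y k b)) a = Csum n (fun k => Lop r (y k) a).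
Proof. induction n; simpl.
  - apply Lop_zero; auto.
  - rewrite Lop_add, IHn. reflexivity. Qed.
Lemma Lop_geo r x z : (forall a, x (S a) = Cmul z (x a)) -> forall a, Lop r x (S a) = Cmul z (Lop r x a).
Proof. induction r; simpl; intros H a0; auto. rewrite !IHr by auto. Csolve. Qed.
Lemma Lop_root r x z : (forall a, x (S a) = Cmul z (x a)) -> In z r -> forall a, Lop r x a = Defs.C0.
Proof. induction r as [|c r IH]; simpl; intros H Hin a; [tauto|].
  destruct Hin as [<-|Hin].
  - rewrite Lop_geo with (z := c) by auto. Csolve.
  - rewrite !IH by auto. Csolve. Qed.


Lemma Cmat_sym P a b : Cmat P a b = Cmat P b a.
Proof. unfold Cmat. replace (2 * PI * INR a * INR b) with (2 * PI * INR b * INR a) by ring. reflexivity. Qed.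

Lemma Cmat_period P a k : (0 < P)%nat -> Cmat P (a + P) k = Cmat P a k.
Proof. intros HP. assert (0 < INR P) by (apply lt_0_INR; lia). unfold Cmat.
  replace (2 * PI * INR (a + P) * INR k / INR P) with (2 * PI * INR a * INR k / INR P + 2 * INR k * PI)
    by (rewrite plus_INR; field; lra).
  rewrite cos_period, sin_period. reflexivity. Qed.

Lemma RtoC_Rsum_mul n g z : Cmul (RtoC (Rsum n g)) z = Csum n (fun i => Cmul (RtoC (g i)) z).
Proof. induction n; simpl. - Csolve. - rewrite <- IHn. Csolve. Qed.

Lemma Cmul_addl a b c : Cmul (Cadd a b) c = Cadd (Cmul a c) (Cmul b c).
Proof. Csolve. Qed.
Lemma Cmul_addr a b c : Cmul c (Cadd a b) = Cadd (Cmul c a) (Cmul c b).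
Proof. Csolve. Qed.

Section Main.
Variables (s P d : nat) (Q : nat -> nat -> Cpx) (G N : nat -> nat -> R) (f : nat -> R) (l : list nat).
Hypothesis Hs : (1 <= s)%nat.
Hypothesis HP : (2 * s + 1 <= P)%nat.
Hypothesis Hl : (length l <= s)%nat.
Hypothesis Hlin : forall j, (j < P)%nat -> col_nonzero d N j -> In j l.

Definition nk (k : nat) : R := Rsum d (fun i => f i * N i k).
Definition yk (k a : nat) : Cpx := Cmul (RtoC (nk k)) (Cconj (Cmat P a k)).
Definition Hs_ (a : nat) : Cpx := Csum P (fun k => yk k a).

Lemma W_orth k' j : (P - 2 * s <= j)%nat -> (j < P)%nat ->
  Csum P (fun k => Cmul (Wmat s P Q k' k) (Cconj (Cmat P j k))) = Defs.C0.
Proof.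
  intros H1 H2. unfold Wmat.
  rewrite (Csum_ext _ _ (fun k => Cadd (Csum (P - 2 * s - 1) (fun m => Cmul (Q k' m) (Cmul (Cmat P m k) (Cconj (Cmat P j k)))))
     (Cmul (Cmat P (P - 2 * s - 1) k) (Cconj (Cmat P j k))))).
  2:{ intros. rewrite Cmul_addl, <- Csum_scar. rewrite (Csum_ext _ _ (fun m => Cmul (Q k' m) (Cmul (Cmat P m i) (Cconj (Cmat P j i))))) by (intros; Csolve). Csolve. }
  rewrite Csum_add, Csum_swap.
  rewrite (Csum_ext _ _ (fun m => Defs.C0)).
  2:{ intros m Hm. rewrite Csum_scal, Cmat_orth by lia. destruct (Nat.eqb_spec m j); [lia|]. Csolve. }
  rewrite Cmat_orth by lia. destruct (Nat.eqb_spec (P - 2 * s - 1) j); [lia|].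
  rewrite Csum_zero by auto. Csolve.
Qed.

Lemma h_init_eq j : (P - 2 * s <= j)%nat -> (j < P)%nat -> h_init s P d (GWN s P Q G N) f j = Hs_ j.
Proof.
  intros H1 H2. unfold h_init. replace (P - 2 * s <=? j)%nat with true by (symmetry; apply Nat.leb_le; lia).
  rewrite (Csum_ext d _ (fun i => Csum P (fun k => Cmul (RtoC (f i * N i k)) (Cconj (Cmat P j k))))).
  2:{ intros i Hi. unfold GWN.
      rewrite (Csum_ext P _ (fun k => Cadd (Csum P (fun k' => Cmul (RtoC (G i k')) (Cmul (Wmat s P Q k' k) (Cconj (Cmat P j k)))))
        (Cmul (RtoC (N i k)) (Cconj (Cmat P j k))))).
      2:{ intros k Hk. rewrite Cmul_addl, <- Csum_scar. rewrite (Csum_ext P _ (fun k' => Cmul (RtoC (G i k')) (Cmul (Wmat s P Q k' k) (Cconj (Cmat P j k))))) by (intros; Csolve). Csolve. }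
      rewrite Csum_add, Csum_swap. rewrite (Csum_ext P _ (fun _ => Defs.C0)).
      2:{ intros k' _. rewrite Csum_scal, W_orth by lia. Csolve. }
      rewrite (Csum_zero P (fun _ => Defs.C0)) by auto.
      transitivity (Cmul (RtoC (f i)) (Csum P (fun k => (Cmul (RtoC (N i k)) (Cconj (Cmat P j k)))))). Csolve.
      rewrite <- Csum_scal. apply Csum_ext; intros; Csolve. }
  rewrite Csum_swap. unfold Hs_, yk. apply Csum_ext; intros k Hk. unfold nk. rewrite RtoC_Rsum_mul. reflexivity.
Qed.

Lemma P_pos : (0 < P)%nat.
Proof. lia. Qed.

Lemma t_eq j : (j < P)%nat -> Csum P (fun k => Cmul (Cmat P j k) (Hs_ k)) = RtoC (nk j).
Proof.
  intros Hj. unfold Hs_, yk.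
  rewrite (Csum_ext P _ (fun k => Csum P (fun k' => Cmul (RtoC (nk k')) (Cmul (Cmat P j k) (Cconj (Cmat P k' k)))))).
  2:{ intros k Hk. rewrite <- Csum_scal. apply Csum_ext; intros k' _. rewrite (Cmat_sym P k k'). Csolve. }
  rewrite Csum_swap.
  rewrite (Csum_ext P _ (fun k' => if (k' =? j)%nat then Cmul Defs.C1 (RtoC (nk k')) else Defs.C0)).
  2:{ intros k' Hk'. rewrite Csum_scal, Cmat_orth by lia. destruct (Nat.eqb_spec j k'), (Nat.eqb_spec k' j); subst; try lia; Csolve. }
  rewrite (Csum_delta P j (Defs.C1) (fun k' => RtoC (nk k'))) by lia.
  Csolve.
Qed.

Lemma Hs_period a : Hs_ (a + P) = Hs_ a.
Proof. unfold Hs_, yk. apply Csum_ext; intros. rewrite Cmat_period by lia. reflexivity. Qed.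

Lemma Hs_periodq a q : Hs_ (a + q * P) = Hs_ a.
Proof. induction q; simpl. - rewrite Nat.add_0_r; auto. - rewrite <- IHq, <- (Hs_period (a + q * P)). f_equal. lia. Qed.

Lemma Hs_mod a : Hs_ (a mod P) = Hs_ a.
Proof. rewrite (Nat.div_mod_eq a P) at 2. rewrite <- Hs_periodq with (q := (a / P)%nat). f_equal. lia. Qed.

Definition zf (k : nat) : Cpx := (cos (2 * PI * INR k / INR P), - sin (2 * PI * INR k / INR P)).

Lemma yk_geo k a : yk k (S a) = Cmul (zf k) (yk k a).
Proof.
  assert (0 < INR P) by (apply lt_0_INR; lia).
  unfold yk, zf, Cmat. rewrite S_INR.
  replace (2 * PI * (INR a + 1) * INR k / INR P) with (2 * PI * INR a * INR k / INR P + 2 * PI * INR k / INR P) by (field; lra).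
  rewrite cos_plus, sin_plus. apply Cpx_eq; unfold Cmul, Cconj, RtoC; simpl. all: unfold Rdiv; ring.
Qed.

Definition roots : list Cpx := map zf l ++ repeat Defs.C0 (s - length l).

Lemma roots_len : length roots = s.
Proof. unfold roots. rewrite length_app, length_map, repeat_length. lia. Qed.

Lemma nk_nonzero k : nk k <> 0 -> col_nonzero d N k.
Proof.
  intros H. unfold col_nonzero. apply Classical_Prop.NNPP. intros C. apply H. unfold nk.
  apply Rsum_zero. intros i Hi. destruct (Req_dec (N i k) 0) as [E|E]. rewrite E; ring. exfalso; apply C; eauto.
Qed.

Lemma LH a : Lop roots Hs_ a = Defs.C0.
Proof.
  unfold Hs_. rewrite Lop_sum. apply Csum_zero. intros k Hk.
  destruct (Req_dec (nk k) 0) as [E|E].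
  - apply Lop_zero. intros b. unfold yk. rewrite E. Csolve.
  - apply Lop_root with (z := zf k). apply yk_geo. unfold roots. apply in_or_app. left. apply in_map.
    apply Hlin; auto. apply nk_nonzero; auto.
Qed.

Definition beta0 (u : nat) : Cpx := Csub Defs.C0 (coef roots u).

Lemma Hs_rec0 a : Hs_ (a + s)%nat = Csum s (fun u => Cmul (beta0 u) (Hs_ (a + u)%nat)).
Proof.
  pose proof (LH a) as E. rewrite Lop_rec, roots_len in E.
  unfold beta0. rewrite (Csum_ext s _ (fun u => Csub Defs.C0 (Cmul (coef roots u) (Hs_ (a + u)%nat)))) by (intros; Csolve).
  rewrite Csum_sub, Csum_zero by auto.
  apply (f_equal (fun z => Csub z (Csum s (fun u : nat => Cmul (coef roots u) (Hs_ (a + u)%nat))))) in E.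
  revert E. unfold Csub, Cadd, Defs.C0; simpl. intros E. apply Cpx_eq; simpl.
  - apply (f_equal fst) in E; simpl in E; lra.
  - apply (f_equal snd) in E; simpl in E; lra.
Qed.

Lemma beta0_solves : beta_solves s P (h_init s P d (GWN s P Q G N) f) beta0.
Proof.
  unfold beta_solves. intros i Hi.
  rewrite h_init_eq by lia.
  rewrite (Csum_ext s _ (fun k => Cmul (beta0 k) (Hs_ (P - s - i + k)%nat))).
  2:{ intros k Hk. rewrite h_init_eq by lia. reflexivity. }
  rewrite <- Hs_rec0. f_equal. lia.
Qed.

Section Beta.
Variable beta : nat -> Cpx.
Hypothesis Hbeta : beta_solves s P (h_init s P d (GWN s P Q G N) f) beta.

Definition Dseq (a : nat) : Cpx := Csub (Csum s (fun u => Cmul (beta u) (Hs_ (a + u)%nat))) (Hs_ (a + s)%nat).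

Lemma LD a : Lop roots Dseq a = Defs.C0.
Proof.
  unfold Dseq. rewrite (Lop_sub roots (fun b => Csum s (fun u => Cmul (beta u) (Hs_ (b + u)%nat))) (fun b => Hs_ (b + s)%nat)).
  rewrite (Lop_sum roots s (fun u b => Cmul (beta u) (Hs_ (b + u)%nat))).
  rewrite Csum_zero.
  - rewrite (Lop_shift roots Hs_ s a), LH. Csolve.
  - intros u Hu. rewrite (Lop_scal roots (beta u) (fun b => Hs_ (b + u)%nat)).
    rewrite (Lop_shift roots Hs_ u a), LH. Csolve.
Qed.

Lemma D_init a : (P - 2 * s <= a)%nat -> (a < P - s)%nat -> Dseq a = Defs.C0.
Proof.
  intros H1 H2. pose proof (Hbeta (P - s - a)%nat ltac:(lia)) as E.
  replace (P - s - (P - s - a))%nat with a in E by lia.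
  rewrite h_init_eq in E by lia.
  rewrite (Csum_ext s _ (fun k => Cmul (beta k) (Hs_ (a + k)%nat))) in E.
  2:{ intros k Hk. rewrite h_init_eq by lia. reflexivity. }
  unfold Dseq. rewrite E. replace (P - (P - s - a))%nat with (a + s)%nat by lia. Csolve.
Qed.

Lemma D_fwd a : (P - 2 * s <= a)%nat -> Dseq a = Defs.C0.
Proof.
  induction a as [a IH] using (well_founded_induction Wf_nat.lt_wf). intros Ha.
  destruct (Nat.lt_ge_cases a (P - s)) as [H|H]; [apply D_init; lia|].
  pose proof (LD (a - s)) as E. rewrite Lop_rec, roots_len in E.
  rewrite Csum_zero in E.
  - replace (a - s + s)%nat with a in E by lia. rewrite <- E. Csolve.
  - intros u Hu. rewrite IH by lia. Csolve.
Qed.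

Lemma D_period a : Dseq (a + P) = Dseq a.
Proof.
  unfold Dseq. replace (a + P + s)%nat with (a + s + P)%nat by lia. rewrite Hs_period.
  f_equal. apply Csum_ext; intros. replace (a + P + i)%nat with (a + i + P)%nat by lia. rewrite Hs_period. reflexivity.
Qed.

Lemma beta_rec a : Hs_ (a + s)%nat = Csum s (fun u => Cmul (beta u) (Hs_ (a + u)%nat)).
Proof.
  pose proof (D_fwd (a + P) ltac:(lia)) as E. rewrite D_period in E. unfold Dseq in E.
  apply Cpx_eq; [apply (f_equal fst) in E | apply (f_equal snd) in E]; unfold Csub, Defs.C0 in E; simpl in E; lra.
Qed.

Lemma hrec_inv m : (m <= P - 2 * s)%nat -> forall k, (k < P)%nat -> (k < m \/ P - 2 * s <= k)%nat ->
  h_rec s P beta (h_init s P d (GWN s P Q G N) f) m k = Hs_ k.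
Proof.
  induction m as [|m IH]; intros Hm k Hk Hkm; simpl h_rec.
  - apply h_init_eq; lia.
  - destruct (Nat.eqb_spec k m).
    + subst k.
      rewrite (Csum_ext s _ (fun u => Cmul (beta u) (Hs_ (m + P - s + u)%nat))).
      * rewrite <- beta_rec. replace (m + P - s + s)%nat with (m + P)%nat by lia. apply Hs_period.
      * intros u Hu. f_equal.
        destruct (Nat.lt_ge_cases (m + u) s) as [H|H].
        -- rewrite Nat.mod_small by lia. rewrite IH by lia. f_equal. lia.
        -- replace (m + u + P - s)%nat with ((m + u - s) + 1 * P)%nat by lia. rewrite Nat.Div0.mod_add.
           rewrite Nat.mod_small by lia. rewrite IH by lia. rewrite <- (Hs_period (m + u - s)). f_equal. lia.
    + apply IH; lia.
Qed.

Lemma tvec_eq j : (j < P)%nat -> t_vec s P d (GWN s P Q G N) f beta j = RtoC (nk j).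
Proof.
  intros Hj. unfold t_vec, h_full. rewrite <- t_eq by auto. apply Csum_ext; intros k Hk.
  rewrite hrec_inv by lia. reflexivity.
Qed.
End Beta.

Lemma good_f : (forall j, (j < P)%nat -> col_nonzero d N j -> nk j <> 0) ->
  ~ phi_fails s P d (GWN s P Q G N) (col_nonzero d N) f.
Proof.
  intros Hg [H|H].
  - apply H. exists beta0. apply beta0_solves.
  - destruct H as [beta [Hb Hn]]. apply Hn. intros j Hj. rewrite tvec_eq by auto. split.
    + intros Hz. apply nk_nonzero. intros E. apply Hz. rewrite E. reflexivity.
    + intros Hc E. apply (Hg j Hj Hc). apply (f_equal fst) in E. exact E.
Qed.
End Main.


Lemma Rprod_nonneg n F : (forall i, (i<n)%nat -> 0 <= F i) -> 0 <= Rprod n F.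
Proof. induction n; simpl; intros H; [lra|]. apply Rmult_le_pos; [apply IHn; intros; apply H; lia| apply H; lia]. Qed.

Lemma null_mono d (E F : (nat -> R) -> Prop) : (forall f, E f -> F f) -> lebesgue_null d F -> lebesgue_null d E.
Proof. intros H HF eps Heps. destruct (HF eps Heps) as [a [b [H1 [H2 H3]]]]. exists a, b. split; [|split]; auto. Qed.

Lemma Rsum_remove K F p : (p < K)%nat -> Rsum K F = Rsum K (fun x => if (x =? p)%nat then 0 else F x) + F p.
Proof.
  intros Hp. rewrite (Rsum_ext K F (fun x => (if (x =? p)%nat then 0 else F x) + (if (x =? p)%nat then 1 * F x else 0))).
  - rewrite Rsum_plus, Rsum_delta by auto. ring.
  - intros x _; destruct (x =? p)%nat; ring.
Qed.

Lemma inj_sum M K (h : nat -> nat) : (forall n, (n < M)%nat -> (h n < K)%nat) ->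
  (forall n n', (n < M)%nat -> (n' < M)%nat -> h n = h n' -> n = n') ->
  forall F, (forall x, 0 <= F x) -> Rsum M (fun n => F (h n)) <= Rsum K F.
Proof.
  induction M; intros Hb Hi F HF; simpl.
  - apply Rsum_nonneg; auto.
  - rewrite (Rsum_remove K F (h M)) by (apply Hb; lia).
    set (F' := fun x => if (x =? h M)%nat then 0 else F x).
    assert (Rsum M (fun n => F (h n)) = Rsum M (fun n => F' (h n))).
    { apply Rsum_ext; intros. unfold F'. destruct (Nat.eqb_spec (h i) (h M)); auto.
      apply Hi in e; lia. }
    rewrite H. assert (Rsum M (fun n => F' (h n)) <= Rsum K F').
    { apply IHM. intros; apply Hb; lia. intros; apply Hi; auto; lia. intros; unfold F'; destruct (_ =? _)%nat; auto; lra. }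
    unfold F' in *. lra.
Qed.

Lemma Rsum_block M K F : Rsum (M * K) F = Rsum M (fun k => Rsum K (fun j => F (k * K + j)%nat)).
Proof. induction M; simpl; auto. rewrite Nat.add_comm, Rsum_add, IHM. f_equal. Qed.

Lemma Rsum_S n F : Rsum (S n) F = Rsum n F + F n.
Proof. reflexivity. Qed.

Lemma Rsum_geo M eps : Rsum M (fun k => eps / 2 ^ (S k)) = eps - eps / 2 ^ M.
Proof. induction M. simpl; field. rewrite Rsum_S, IHM. simpl. field. apply pow_nonzero; lra. Qed.

Lemma null_union d (E : nat -> (nat -> R) -> Prop) : (forall k, lebesgue_null d (E k)) ->
  lebesgue_null d (fun f => exists k, E k f).
Proof.
  intros HE eps Heps.
  assert (Hk : forall k, 0 < eps / 2 ^ (S k)) by (intros; apply Rdiv_lt_0_compat; auto; apply pow_lt; lra).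
  set (Pk := fun k (a b : nat -> nat -> R) => (forall n i, (i < d)%nat -> a n i <= b n i) /\
      (forall M, Rsum M (fun n => Rprod d (fun i => b n i - a n i)) <= eps / 2 ^ (S k)) /\
      (forall f, E k f -> exists n, forall i, (i < d)%nat -> a n i <= f i <= b n i)).
  assert (Hex : forall k, exists p : (nat -> nat -> R) * (nat -> nat -> R), Pk k (fst p) (snd p)).
  { intros k. destruct (HE k (eps / 2 ^ (S k)) (Hk k)) as [a [b Hab]]. exists (a, b). exact Hab. }
  set (cov := fun k => IndefiniteDescription.constructive_indefinite_description _ (Hex k)).
  set (A := fun k => fst (proj1_sig (cov k))). set (B := fun k => snd (proj1_sig (cov k))).
  assert (HAB : forall k, Pk k (A k) (B k)).
  { intros k. unfold A, B. exact (proj2_sig (cov k)). }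
  unfold Pk in HAB.
  set (V := fun k n => Rprod d (fun i => B k n i - A k n i)).
  assert (HV : forall k n, 0 <= V k n).
  { intros. apply Rprod_nonneg. intros. destruct (HAB k) as [H1 _]. specialize (H1 n i H). lra. }
  exists (fun n i => A (fst (Cantor.of_nat n)) (snd (Cantor.of_nat n)) i),
         (fun n i => B (fst (Cantor.of_nat n)) (snd (Cantor.of_nat n)) i).
  split; [|split].
  - intros n i Hi. apply (HAB _). auto.
  - intros M. change (Rsum M (fun n => V (fst (Cantor.of_nat n)) (snd (Cantor.of_nat n))) <= eps).
    set (h := fun n => (fst (Cantor.of_nat n) * M + snd (Cantor.of_nat n))%nat).
    assert (Hc : forall n, (fst (Cantor.of_nat n) <= n /\ snd (Cantor.of_nat n) <= n)%nat).
    { intros n. pose proof (Cantor.to_nat_non_decreasing (fst (Cantor.of_nat n)) (snd (Cantor.of_nat n))).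
      rewrite <- surjective_pairing, Cantor.cancel_to_of in H. lia. }
    set (F := fun x => V (x / M)%nat (x mod M)%nat).
    assert (E1 : forall n, (n < M)%nat -> V (fst (Cantor.of_nat n)) (snd (Cantor.of_nat n)) = F (h n)).
    { intros n Hn. unfold F, h. destruct (Hc n).
      rewrite Nat.div_add_l, Nat.div_small, Nat.add_0_r by lia.
      rewrite Nat.add_comm, Nat.Div0.mod_add, Nat.mod_small by lia. reflexivity. }
    rewrite (Rsum_ext M _ (fun n => F (h n))) by auto.
    apply Rle_trans with (Rsum (M * M) F).
    + apply inj_sum.
      * intros n Hn. unfold h. destruct (Hc n). nia.
      * intros n n' Hn Hn' Heq. unfold h in Heq. destruct (Hc n), (Hc n').
        assert (X1 : fst (Cantor.of_nat n) = fst (Cantor.of_nat n')).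
        { apply (f_equal (fun x => x / M)%nat) in Heq. rewrite !Nat.div_add_l, !Nat.div_small in Heq by lia. lia. }
        assert (X2 : snd (Cantor.of_nat n) = snd (Cantor.of_nat n')) by lia.
        apply Cantor.of_nat_inj. rewrite (surjective_pairing (Cantor.of_nat n)), (surjective_pairing (Cantor.of_nat n')), X1, X2. reflexivity.
      * intros; unfold F; auto.
    + rewrite Rsum_block. apply Rle_trans with (Rsum M (fun k => eps / 2 ^ (S k))).
      * apply Rsum_le. intros k Hk'. unfold F.
        rewrite (Rsum_ext M _ (fun j => V k j)).
        -- apply (HAB k).
        -- intros j Hj. rewrite Nat.div_add_l, Nat.div_small, Nat.add_0_r by lia.
           rewrite Nat.add_comm, Nat.Div0.mod_add, Nat.mod_small by lia. reflexivity.
      * rewrite Rsum_geo. assert (0 < eps / 2 ^ M) by (apply Rdiv_lt_0_compat; auto; apply pow_lt; lra). lra.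
  - intros f [k Hf]. destruct (HAB k) as [_ [_ H3]]. destruct (H3 f Hf) as [j Hj].
    exists (Cantor.to_nat (k, j)). rewrite Cantor.cancel_of_to. simpl. auto.
Qed.


Fixpoint enc (T d : nat) (t : nat -> nat) : nat :=
  match d with O => O | S d' => (t O + enc T d' (fun i => t (S i)) * T)%nat end.
Fixpoint digit (T i m : nat) : nat :=
  match i with O => (m mod T)%nat | S i' => digit T i' (m / T)%nat end.

Lemma enc_lt T d t : (0 < T)%nat -> (forall i, (i < d)%nat -> (t i < T)%nat) -> (enc T d t < T ^ d)%nat.
Proof.
  revert t; induction d; intros t HT Ht; simpl; [lia|].
  assert (enc T d (fun i => t (S i)) < T ^ d)%nat by (apply IHd; auto; intros; apply Ht; lia).
  assert (t 0 < T)%nat by (apply Ht; lia). nia.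
Qed.

Lemma digit_enc T d t i : (0 < T)%nat -> (forall i, (i < d)%nat -> (t i < T)%nat) -> (i < d)%nat -> digit T i (enc T d t) = t i.
Proof.
  revert t i; induction d; intros t i HT Ht Hi; [lia|]. simpl enc.
  destruct i; simpl.
  - rewrite Nat.Div0.mod_add, Nat.mod_small by (apply Ht; lia). reflexivity.
  - rewrite Nat.div_add, Nat.div_small by (try apply Ht; lia). simpl. apply (IHd (fun j => t (S j))); auto; intros; try apply Ht; lia.
Qed.

Lemma Rprod_shift n F : Rprod (S n) F = F O * Rprod n (fun i => F (S i)).
Proof. induction n; simpl in *; [ring|]. rewrite IHn. ring. Qed.

Lemma Rprod_ext n F G : (forall i, (i < n)%nat -> F i = G i) -> Rprod n F = Rprod n G.
Proof. induction n; simpl; intros H; auto. rewrite IHn by (intros; apply H; lia). rewrite H by lia. reflexivity. Qed.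

Lemma Rsum_scal_r n c F : Rsum n (fun i => F i * c) = Rsum n F * c.
Proof. induction n; simpl; [lra|]. rewrite IHn; lra. Qed.

Lemma sum_prod T d (w : nat -> nat -> R) : (0 < T)%nat ->
  Rsum (T ^ d) (fun m => Rprod d (fun i => w i (digit T i m))) = Rprod d (fun i => Rsum T (w i)).
Proof.
  intros HT. revert w; induction d; intros w.
  - simpl. ring.
  - rewrite Nat.pow_succ_r', Nat.mul_comm, Rsum_block.
    rewrite (Rsum_ext _ _ (fun k => Rsum T (w O) * Rprod d (fun i => w (S i) (digit T i k)))).
    + rewrite Rsum_scal, (IHd (fun i => w (S i))), Rprod_shift. reflexivity.
    + intros k Hk. rewrite <- Rsum_scal_r. apply Rsum_ext; intros j Hj.
      rewrite Rprod_shift. simpl digit. rewrite Nat.add_comm, Nat.Div0.mod_add, Nat.mod_small by lia.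
      rewrite Nat.div_add, Nat.div_small by lia. simpl. reflexivity.
Qed.

Lemma Rprod_if n i0 x y : (i0 < n)%nat -> Rprod n (fun i => if (i =? i0)%nat then x else y) = x * Rprod n (fun i => if (i =? i0)%nat then 1 else y).
Proof.
  induction n; intros H; [lia|]. simpl Rprod.
  destruct (Nat.eqb_spec n i0).
  - subst. rewrite (Rprod_ext _ _ (fun i => if (i =? i0)%nat then 1 else y)). ring.
    intros i Hi. destruct (Nat.eqb_spec i i0); [lia|auto].
  - rewrite IHn by lia. ring.
Qed.

Lemma exists_nat_gt x : exists n : nat, x < INR n.
Proof.
  destruct (archimed x) as [H1 H2].
  destruct (Z_lt_le_dec (up x) 0) as [Hz|Hz].
  - exists O. simpl. apply IZR_lt in Hz. lra.
  - exists (Z.to_nat (up x)). rewrite INR_IZR_INZ, Z2Nat.id by auto. lra.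
Qed.

Lemma cell_exists L dl T y : 0 < dl -> (1 <= T)%nat -> -L <= y <= -L + INR T * dl ->
  exists t, (t < T)%nat /\ -L + INR t * dl <= y <= -L + INR (S t) * dl.
Proof.
  intros Hd HT. induction T as [|T IH]; [lia|]. intros Hy.
  destruct (Nat.eq_dec T 0) as [->|HT0].
  - exists O. simpl in *. split; [lia|]. lra.
  - destruct (Rle_lt_dec y (-L + INR T * dl)).
    + destruct (IH ltac:(lia) ltac:(lra)) as [t [Ht1 Ht2]]. exists t. split; [lia|auto].
    + exists T. split; [lia|]. lra.
Qed.

Lemma Rabs_Rsum n F : Rabs (Rsum n F) <= Rsum n (fun i => Rabs (F i)).
Proof. induction n; simpl. rewrite Rabs_R0; lra. eapply Rle_trans; [apply Rabs_triang|]. lra. Qed.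

Lemma Rsum_split_at n i0 g : (i0 < n)%nat -> Rsum n g = g i0 + Rsum n (fun i => if (i =? i0)%nat then 0 else g i).
Proof.
  intros H. rewrite (Rsum_remove n g i0 H). ring.
Qed.

Lemma Rsum_const' n c : Rsum n (fun _ => c) = INR n * c.
Proof. induction n; simpl Rsum; [simpl; lra|]. rewrite IHn, S_INR; ring. Qed.

Lemma Rsum_trunc M K F : (forall m, 0 <= F m) -> (forall m, (K <= m)%nat -> F m = 0) -> Rsum M F <= Rsum K F.
Proof.
  intros H0 H1. induction M.
  - simpl. apply Rsum_nonneg; auto.
  - destruct (Nat.le_gt_cases (S M) K).
    + replace K with (S M + (K - S M))%nat by lia. rewrite Rsum_add.
      assert (0 <= Rsum (K - S M) (fun i => F (S M + i)%nat)) by (apply Rsum_nonneg; auto). lra.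
    + rewrite Rsum_S, H1 by lia. lra.
Qed.

Lemma null_hyper_box d (a : nat -> R) i0 L : (i0 < d)%nat -> a i0 <> 0 -> 0 < L ->
  lebesgue_null d (fun f => Rsum d (fun i => f i * a i) = 0 /\ forall i, (i < d)%nat -> -L <= f i <= L).
Proof.
  intros Hi0 Ha HL eps Heps.
  assert (Hai : 0 < Rabs (a i0)) by (apply Rabs_pos_lt; auto).
  set (A := Rsum d (fun i => Rabs (a i)) / Rabs (a i0)).
  assert (HA : 0 <= A) by (unfold A; apply Rmult_le_pos; [apply Rsum_nonneg; intros; apply Rabs_pos | left; apply Rinv_0_lt_compat; auto]).
  set (C := Rprod d (fun i => if (i =? i0)%nat then 1 else 2 * L)).
  assert (HC : 0 <= C) by (apply Rprod_nonneg; intros; destruct (_ =? _)%nat; lra).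
  destruct (exists_nat_gt (4 * A * L * C / eps)) as [T0 HT0].
  set (T := S T0).
  assert (HT : 0 < INR T) by (apply lt_0_INR; unfold T; lia).
  assert (HTg : 4 * A * L * C / eps < INR T).
  { unfold T. rewrite S_INR. lra. }
  set (dl := 2 * L / INR T).
  assert (Hdl : 0 < dl) by (unfold dl; apply Rdiv_lt_0_compat; lra).
  assert (HTdl : INR T * dl = 2 * L) by (unfold dl; field; lra).
  set (x := fun m i => -L + INR (digit T i m) * dl).
  set (cen := fun m => - Rsum d (fun i => if (i =? i0)%nat then 0 else a i * x m i) / a i0).
  set (e := fun m => if (digit T i0 m =? 0)%nat then A * dl else 0).
  assert (He : forall m, 0 <= e m) by (intros; unfold e; destruct (_ =? _)%nat; nra).
  set (lo := fun m i => if (m <? T ^ d)%nat then (if (i =? i0)%nat then cen m - e m else x m i) else 0).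
  set (hi := fun m i => if (m <? T ^ d)%nat then (if (i =? i0)%nat then cen m + e m else x m i + dl) else 0).
  exists lo, hi. split; [|split].
  - intros m i Hi. unfold lo, hi. destruct (m <? T ^ d)%nat; [|lra]. destruct (i =? i0)%nat; specialize (He m); lra.
  - intros M. set (w := fun i t => if (i =? i0)%nat then (if (t =? 0)%nat then 2 * A * dl else 0) else dl).
    apply Rle_trans with (Rsum (T ^ d) (fun m => Rprod d (fun i => w i (digit T i m)))).
    + apply Rle_trans with (Rsum (T ^ d) (fun m => Rprod d (fun i => hi m i - lo m i))).
      * apply Rsum_trunc.
        -- intros m. apply Rprod_nonneg. intros i _. unfold lo, hi. destruct (m <? T ^ d)%nat; [|lra]. destruct (i =? i0)%nat; specialize (He m); lra.
        -- intros m Hm. apply Rle_antisym.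
           ++ destruct d; [lia|]. simpl Rprod. unfold lo, hi. replace (m <? T ^ S d)%nat with false by (symmetry; apply Nat.ltb_ge; auto). 
              rewrite Rminus_diag, Rmult_0_r. lra.
           ++ apply Rprod_nonneg. intros i _. unfold lo, hi. destruct (m <? T ^ d)%nat; [|lra]. destruct (i =? i0)%nat; specialize (He m); lra.
      * right. apply Rsum_ext. intros m Hm. apply Rprod_ext. intros i Hi. unfold lo, hi, w, e.
        replace (m <? T ^ d)%nat with true by (symmetry; apply Nat.ltb_lt; auto).
        destruct (i =? i0)%nat eqn:Ei; [apply Nat.eqb_eq in Ei; subst i|ring].
        destruct (digit T i0 m =? 0)%nat; ring.
    + rewrite sum_prod by (unfold T; lia).
      rewrite (Rprod_ext d _ (fun i => if (i =? i0)%nat then 2 * A * dl else 2 * L)).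
      * rewrite Rprod_if by auto. fold C.
        apply Rmult_le_reg_r with (INR T); auto.
        replace (2 * A * dl * C * INR T) with (4 * A * L * C) by (unfold dl; field; lra).
        apply Rmult_lt_compat_l with (r := eps) in HTg; auto.
        replace (eps * (4 * A * L * C / eps)) with (4 * A * L * C) in HTg by (field; lra). lra.
      * intros i Hi. unfold w. destruct (i =? i0)%nat.
        -- rewrite (Rsum_ext T _ (fun t => if (t =? 0)%nat then (2 * A * dl) * 1 else 0)).
           ++ rewrite (Rsum_delta T 0 (2 * A * dl) (fun _ => 1)) by (unfold T; lia). ring.
           ++ intros; destruct (_ =? _)%nat; ring.
        -- rewrite Rsum_const'. exact HTdl.
  - intros f [Hf Hb].
    assert (Hex : forall i, exists t, (i < d)%nat -> (t < T)%nat /\ -L + INR t * dl <= f i <= -L + INR (S t) * dl).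
    { intros i. destruct (Nat.lt_ge_cases i d) as [Hi|Hi].
      - destruct (cell_exists L dl T (f i) Hdl ltac:(unfold T; lia)) as [t Ht].
        + specialize (Hb i Hi). lra.
        + exists t; auto.
      - exists O; intros; lia. }
    set (tf := fun i => proj1_sig (IndefiniteDescription.constructive_indefinite_description _ (Hex i))).
    assert (Htf : forall i, (i < d)%nat -> (tf i < T)%nat /\ -L + INR (tf i) * dl <= f i <= -L + INR (S (tf i)) * dl).
    { intros i Hi. unfold tf. destruct (IndefiniteDescription.constructive_indefinite_description _ (Hex i)) as [t Ht]. simpl. auto. }
    set (t' := fun i => if (i =? i0)%nat then O else tf i).
    assert (Ht' : forall i, (i < d)%nat -> (t' i < T)%nat).
    { intros i Hi. unfold t'. destruct (i =? i0)%nat; [unfold T; lia|apply Htf; auto]. }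
    exists (enc T d t').
    assert (Hm : (enc T d t' <? T ^ d)%nat = true) by (apply Nat.ltb_lt, enc_lt; auto; unfold T; lia).
    assert (Hdig : forall i, (i < d)%nat -> digit T i (enc T d t') = t' i) by (intros; apply digit_enc; auto; unfold T; lia).
    intros i Hi. unfold lo, hi. rewrite Hm.
    destruct (Nat.eqb_spec i i0) as [->|Hne].
    + unfold e. rewrite Hdig by auto. replace (t' i0) with O by (unfold t'; rewrite Nat.eqb_refl; reflexivity). simpl.
      set (m := enc T d t').
      assert (Key : (f i0 - cen m) * a i0 = - Rsum d (fun i => if (i =? i0)%nat then 0 else a i * (f i - x m i))).
      { unfold cen. rewrite (Rsum_split_at d i0 (fun i => f i * a i)) in Hf by auto.
        rewrite (Rsum_ext d (fun i => if (i =? i0)%nat then 0 else a i * (f i - x m i))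
          (fun i => (if (i =? i0)%nat then 0 else f i * a i) + - (if (i =? i0)%nat then 0 else a i * x m i))).
        - rewrite Rsum_plus, Rsum_opp. field_simplify; auto. lra.
        - intros; destruct (_ =? _)%nat; ring. }
      assert (Bnd : Rabs ((f i0 - cen m) * a i0) <= dl * Rsum d (fun i => Rabs (a i))).
      { rewrite Key, Rabs_Ropp. eapply Rle_trans; [apply Rabs_Rsum|]. rewrite <- Rsum_scal. apply Rsum_le.
        intros i Hi'. destruct (Nat.eqb_spec i i0).
        - rewrite Rabs_R0. apply Rmult_le_pos; [lra|apply Rabs_pos].
        - rewrite Rabs_mult, (Rmult_comm dl). apply Rmult_le_compat_l; [apply Rabs_pos|].
          unfold x. rewrite Hdig by auto. unfold t'. destruct (Nat.eqb_spec i i0); [lia|].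
          destruct (Htf i Hi') as [_ Hc]. rewrite S_INR in Hc. apply Rabs_le. lra. }
      rewrite Rabs_mult in Bnd.
      assert (Rabs (f i0 - cen m) <= A * dl).
      { unfold A. apply Rmult_le_reg_r with (Rabs (a i0)); auto. replace (Rsum d (fun i => Rabs (a i)) / Rabs (a i0) * dl * Rabs (a i0)) with (dl * Rsum d (fun i => Rabs (a i))) by (field; lra). auto. }
      revert H; unfold Rabs; destruct (Rcase_abs _); intros; lra.
    + replace (i =? i0)%nat with false by (symmetry; apply Nat.eqb_neq; auto).
      unfold x. rewrite Hdig by auto. unfold t'. replace (i =? i0)%nat with false by (symmetry; apply Nat.eqb_neq; auto).
      destruct (Htf i Hi) as [_ Hc]. rewrite S_INR in Hc. lra.
Qed.


Lemma Rsum_term_le n F j : (forall i, (i < n)%nat -> 0 <= F i) -> (j < n)%nat -> F j <= Rsum n F.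
Proof.
  intros H Hj. rewrite (Rsum_split_at n j F Hj).
  assert (0 <= Rsum n (fun i => if (i =? j)%nat then 0 else F i)) by (apply Rsum_nonneg; intros; destruct (_ =? _)%nat; [lra|auto]).
  lra.
Qed.

Lemma null_hyper d (a : nat -> R) i0 : (i0 < d)%nat -> a i0 <> 0 ->
  lebesgue_null d (fun f => Rsum d (fun i => f i * a i) = 0).
Proof.
  intros Hi Ha.
  apply null_mono with (fun f => exists L : nat, Rsum d (fun i => f i * a i) = 0 /\ forall i, (i < d)%nat -> - INR (S L) <= f i <= INR (S L)).
  - intros f Hf. destruct (exists_nat_gt (Rsum d (fun i => Rabs (f i)))) as [n Hn].
    exists n. split; auto. intros i Hi'.
    assert (Rabs (f i) <= Rsum d (fun i => Rabs (f i))) by (apply (Rsum_term_le d (fun i => Rabs (f i))); auto; intros; apply Rabs_pos).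
    rewrite S_INR. set (B := Rsum d (fun i => Rabs (f i))) in *.
    revert H; unfold Rabs at 1; destruct (Rcase_abs (f i)); intros; lra.
  - apply null_union. intros L. apply (null_hyper_box d a i0); auto. apply lt_0_INR; lia.
Qed.

Lemma null_empty d (E : (nat -> R) -> Prop) : (1 <= d)%nat -> (forall f, ~ E f) -> lebesgue_null d E.
Proof.
  intros Hd HE eps Heps. exists (fun _ _ => 0), (fun _ _ => 0). split; [|split].
  - intros; lra.
  - intros M. rewrite Rsum_zero. lra. intros. destruct d; [lia|]. simpl. ring.
  - intros f Hf; exfalso; apply (HE f Hf).
Qed.

Theorem lemma4 (s P d : nat) (Hs : (1 <= s)%nat) (HP : (2 * s + 1 <= P)%nat)
  (Hd : (1 <= d)%nat)
  (Q : nat -> nat -> Cpx) (HQ : is_Q s P Q)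
  (G N : nat -> nat -> R)
  (HN : exists l : list nat, NoDup l /\ (length l <= s)%nat /\
          forall j, (j < P)%nat -> col_nonzero d N j -> In j l) :
  lebesgue_null d (phi_fails s P d (GWN s P Q G N) (col_nonzero d N)).
Proof.
  destruct HN as [l [_ [Hl Hlin]]].
  apply null_mono with (fun f => exists j, (exists i0, (i0 < d)%nat /\ N i0 j <> 0) /\ Rsum d (fun i => f i * N i j) = 0).
  - intros f Hf. apply Classical_Prop.NNPP. intros Hn.
    apply (good_f s P d Q G N f l Hs HP Hl Hlin); auto.
    intros j Hj Hc E. apply Hn. exists j. split; auto.
  - apply null_union. intros j.
    destruct (Classical_Prop.classic (exists i0, (i0 < d)%nat /\ N i0 j <> 0)) as [[i0 [Hi0 Hn0]]|Hno].
    + apply null_mono with (fun f => Rsum d (fun i => f i * N i j) = 0).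
      * intros f [_ H]; auto.
      * apply (null_hyper d (fun i => N i j) i0); auto.
    + apply null_empty; auto. intros f [H _]; auto.
Qed.
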